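(* Let $G$ and $H$ be finite abelian groups, written additively, of the same even order $k>2$, let $f:G\to H$ be semi-planar, and suppose $S(G,H;f)$ splits into two substructures $S_1$ and $S_2$ with $\mathcal{L}(0,0)\in S_1$. For $a\in G$ let $P_a^1=\{b\in H : \mathcal{L}(a,b)\in S_1\}$. Then the set $A=\{a\in G : P_0^1=P_a^1\}$ is either a subgroup of $G$ of index $2$, or $A=G$.
   Context: A function $f:G\to H$ is semi-planar if for every non-identity $a\in G$ and every $y\in H$, the equation $f(x+a)-f(x)=y$ has either $0$ or $2$ solutions $x\in G$. The incidence structure $S(G,H;f)$ has points $(x,y)\in G\times H$ and lines $\mathcal{L}(a,b)$ for $(a,b)\in G\times H$, with $(x,y)$ incident with $\mathcal{L}(a,b)$ iff $y=f(x-a)+b$. Its incidence graph is the bipartite graph on points and lines with an edge for each incident pair. $S(G,H;f)$ splits into two substructures $S_1,S_2$ if its incidence graph has exactly two connected components; $S_1,S_2$ are the incidence structures formed by the points and lines of the two components, and $\mathcal{L}(a,b)\in S_i$ means the line lies in component $S_i$. *)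

(* Defs.v *)
From HB Require Import structures.
From mathcomp Require Import all_boot all_order all_algebra.
Set Implicit Arguments. Unset Strict Implicit. Unset Printing Implicit Defensive.
Import GRing.Theory.
Local Open Scope ring_scope.

Definition semi_planar (G H : finZmodType) (f : G -> H) : Prop :=
  forall (a : G), a != 0 -> forall (y : H),
    let n := #|[set x : G | f (x + a) - f x == y]| in
    (n == 0)%N || (n == 2)%N.

(* Vertices of the incidence graph of S(G,H;f): points inl (x,y), lines inr (a,b). *)
Definition vertex (G H : finZmodType) : finType := ((G * H) + (G * H))%type.

Definition incident (G H : finZmodType) (f : G -> H) (p l : G * H) : bool :=
  p.2 == f (p.1 - l.1) + l.2.

Definition inc_edge (G H : finZmodType) (f : G -> H) : rel (vertex G H) :=
  fun u v =>
    match u, v with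
    | inl p, inr l => incident f p l
    | inr l, inl p => incident f p l
    | _, _ => false
    end.

(* S(G,H;f) splits into two substructures: the incidence graph has exactly two
   connected components. *)
Definition splits_in_two (G H : finZmodType) (f : G -> H) : Prop :=
  n_comp (inc_edge f) (@predT (vertex G H)) = 2%N.

Definition P1 (G H : finZmodType) (f : G -> H) (a : G) : {set H} :=
  [set b : H | connect (inc_edge f) (inr (0, 0)) (inr (a, b))].

(* Main.v *)
Require Import Defs.
From mathcomp Require Import all_boot all_order all_algebra.
Import GRing.Theory.
Local Open Scope ring_scope.

Set Implicit Arguments.
Section Aux.
Variables (G H : finZmodType) (f : G -> H).

Local Notation e := (inc_edge f).

Lemma e_sym : symmetric e.
Proof. by case=> [p|l] [q|m]. Qed.

Lemma csym : connect_sym e.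
Proof. exact: sym_connect_sym e_sym. Qed.

Definition shift (s : G) (u : vertex G H) : vertex G H :=
  match u with
  | inl p => inl (p.1 + s, p.2)
  | inr l => inr (l.1 + s, l.2)
  end.

Lemma shift_e s u v : e (shift s u) (shift s v) = e u v.
Proof.
have K : forall x a : G, x + s - (a + s) = x - a.
  by move=> x a; rewrite opprD addrACA subrr addr0.
by case: u v => [[x y]|[a b]] [[x' y']|[a' b']]; rewrite /= /incident /= ?K.
Qed.

Lemma shift_connect s {u v} : connect e u v -> connect e (shift s u) (shift s v).
Proof.
move=> /connectP [p pth ->]; elim: p u pth => [|w p IH] u /=; first by [].
move=> /andP [euw pw]; apply: connect_trans (IH _ pw).
by apply: connect1; rewrite shift_e.
Qed.

Definition L (a : G) (b : H) : vertex G H := inr (a, b).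

Definition c (a : G) := connect e (L 0 0) (L a 0).

Lemma cdiff x y : connect e (L y 0) (L x 0) = c (x - y).
Proof.
apply/idP/idP => h.
  have := shift_connect (- y) h; by rewrite /= subrr.
have := shift_connect y h; by rewrite /= add0r subrK.
Qed.

Lemma conn_lines : forall u, connect e u (L (match u with inl p => p.1 | inr l => l.1 end)
     (match u with inl p => p.2 - f 0 | inr l => l.2 end)).
Proof.
case=> [[x y]|[a b]] /=; last by [].
apply: connect1; by rewrite /= /incident /= subrr addrC subrK.
Qed.

End Aux.
Arguments c {G H}.
Arguments L : clear implicits.

Theorem theorem3 (G H : finZmodType) (f : G -> H) :
  #|G| = #|H| -> ~~ odd #|G| -> (2 < #|G|)%N ->
  semi_planar f -> splits_in_two f ->
  let A := [set a : G | P1 f 0 == P1 f a] in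
  ((0 \in A) /\ {in A &, forall x y, x - y \in A} /\ #|G| = (2 * #|A|)%N)
  \/ A = [set: G].
Proof.
move=> _ _ _ _ split A.
set e := inc_edge f.
have sy := csym f.
set L00 := L G H 0 0.
have [w nw] : exists w, ~~ connect e L00 w.
  apply/existsP; apply: contraT => /existsPn hall.
  move: split; rewrite /splits_in_two /n_comp_mem.
  have : (#|predI (fingraph.roots e) (mem predT)| <= #|pred1 (fingraph.root e L00)|)%N.
    apply: subset_leq_card; apply/subsetP => r; rewrite !inE /= => /andP [/eqP rr _].
    have := hall r; rewrite negbK => /(fingraph.rootP sy) ->; by rewrite rr.
  by rewrite card1 => h1 h2; rewrite h2 in h1.
have N2 : forall u, connect e L00 u || connect e w u.
  move=> u; apply: contraT; rewrite negb_or => /andP [n1 n2].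
  move: split; rewrite /splits_in_two /n_comp_mem.
  have : (size [:: fingraph.root e L00; fingraph.root e w; fingraph.root e u] <= #|predI (fingraph.roots e) (mem predT)|)%N.
    rewrite -(card_uniqP _).
      apply: subset_leq_card; apply/subsetP => r; rewrite !inE /=.
      by move=> /or3P [] /eqP ->; rewrite (fingraph.roots_root sy).
    by rewrite /= !inE !negb_or !fingraph.root_connect // n1 n2 nw.
  by move=> /= h1 h2; rewrite h2 in h1.
have hom : forall x y, c f (x - y) = (c f x == c f y).
  move=> x y; rewrite -cdiff.
  case cx: (c f x); case cy: (c f y) => /=.
  - apply: connect_trans (cx); by rewrite sy.
  - apply/negP => h; move/negP: cy; apply; apply: connect_trans (cx) _; by rewrite sy.
  - apply/negP => h; move/negP: cx; apply; exact: connect_trans cy h.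
  - have hx : connect e w (L G H x 0) by move: (N2 (L G H x 0)); rewrite /L00 -/(c f x) cx.
    have hy : connect e w (L G H y 0) by move: (N2 (L G H y 0)); rewrite /L00 -/(c f y) cy.
    apply: connect_trans hx; by rewrite sy.
have c0 : c f 0 by rewrite /c connect0.
have Ac : forall a, (a \in A) = c f a.
  move=> a; rewrite inE; apply/eqP/idP => [h|ca].
    have : (0 : H) \in P1 f a by rewrite -h inE connect0.
    by rewrite inE.
  apply/setP => b; rewrite !inE; apply/idP/idP => h.
    have h2 := shift_connect f a h; rewrite /= add0r in h2.
    exact: connect_trans ca h2.
  have h2 := shift_connect f (- a) h; rewrite /= sub0r subrr in h2.
  apply: connect_trans h2.
  have := hom 0 a; rewrite c0 ca sub0r /= => h3.
  exact: h3.
have homA : forall x y, (x - y \in A) = ((x \in A) == (y \in A)).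
  by move=> x y; rewrite !Ac hom.
case: (boolP [forall a, a \in A]) => [/forallP hA|/forallPn [g gA]].
  by right; apply/setP => a; rewrite (hA a) in_setT.
left; split; first by rewrite Ac.
split; first by move=> x y xA yA; rewrite homA xA yA.
have hC : ~: A = [set a + g | a in A].
  apply/setP => x; rewrite inE; apply/idP/imsetP => [xn|[a aA ->]].
    exists (x - g); last by rewrite subrK.
    by rewrite homA (negbTE xn) (negbTE gA).
  apply/negP => h; have := homA (a + g) a; rewrite addrAC subrr add0r h aA /= => gA'.
  by rewrite gA' in gA.
have := cardsC A; rewrite hC card_imset; last by move=> u v /= /addIr.
by move=> <-; rewrite mul2n -addnn.
Qed.
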